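(* Assume (A1). Let $g:\mathcal X\to\mathbb R$ with $0<\|\nabla g\|_\infty\le\|g\|_\infty$, and let $u$ be the solution of problem (P) with boundary data $g|_\Gamma$. Then for any two neighbors $x,y$ in the graph (i.e. $w_{xy}>0$), $$|u(x)-u(y)|\le\left(\frac{4\log\big(\|g\|_\infty\|\nabla g\|_\infty^{-1}\big)}{1-\alpha+2\alpha\delta}+5\right)\|\nabla g\|_\infty.$$
   Context: $\mathcal X$ is a finite vertex set and $W=(w_{xy})$ a symmetric matrix of nonnegative weights defining a connected graph, with degrees $d_x=\sum_{y}w_{xy}$ and neighbor sets $N_x=\{y\in\mathcal X:w_{xy}>0\}$. For $p\ge2$, $\alpha=1/(p-1)$, and $$\mathcal L_p u(x)=\alpha\,\frac{1}{d_x}\sum_{y}w_{xy}\big(u(x)-u(y)\big)+(1-\alpha)\Big(u(x)-\tfrac12\big(\max_{N_x}u+\min_{N_x}u\big)\Big).$$ $\Gamma\subset\mathcal X$ is the set of labeled vertices. Problem (P): find $u:\mathcal X\to\mathbb R$ with $\mathcal L_pu(x)=0$ for $x\in\mathcal X\setminus\Gamma$ and $u=g$ on $\Gamma$; it has a unique solution. Assumption (A1): $\Gamma\cap N_x\neq\varnothing$ for every $x\in\mathcal X$. Notation: $\|g\|_\infty=\max_{x\in\mathcal X}|g(x)|$, $\|\nabla g\|_\infty=\max_{x,y\in\mathcal X}|g(x)-g(y)|\mathbb 1_{w_{xy}>0}$, and $$\delta=\min_{x\in\mathcal X}\frac{\sum_{y\in\mathcal X}w_{xy}\mathbb 1_{y\in\Gamma}}{\sum_{z\in\mathcal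 X}w_{xz}}.$$ *)

(* Defs.v *)
From mathcomp Require Import all_boot all_order all_algebra.
From mathcomp Require Import all_classical all_reals all_analysis.
Set Implicit Arguments. Unset Strict Implicit. Unset Printing Implicit Defensive.
Import Order.TTheory GRing.Theory Num.Theory.
Local Open Scope ring_scope.

Section Graph.
Variables (R : realType) (T : finType) (w : T -> T -> R).

Definition adj : rel T := fun x y => 0 < w x y.

Definition connected_graph : Prop := forall x y : T, connect adj x y.

Definition deg (x : T) : R := \sum_(y : T) w x y.

(* max and min of u over the neighbor set N_x (if N_x is empty, 0; never
   used in that case under (A1)). The initial value u y0 has y0 \in N_x. *)
Definition maxN (u : T -> R) (x : T) : R :=
  match [pick y | adj x y] with
  | Some y0 => \big[Num.max/u y0]_(y | adj x y) u y
  | None => 0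
  end.
Definition minN (u : T -> R) (x : T) : R :=
  match [pick y | adj x y] with
  | Some y0 => \big[Num.min/u y0]_(y | adj x y) u y
  | None => 0
  end.

Definition alpha (p : R) : R := 1 / (p - 1).

Definition Lp (p : R) (u : T -> R) (x : T) : R :=
  alpha p * ((1 / deg x) * \sum_(y : T) w x y * (u x - u y))
  + (1 - alpha p) * (u x - (maxN u x + minN u x) / 2).

Definition solves_P (p : R) (Gam : {set T}) (g u : T -> R) : Prop :=
  (forall x, x \notin Gam -> Lp p u x = 0) /\ (forall x, x \in Gam -> u x = g x).

Definition A1 (Gam : {set T}) : Prop := forall x : T, exists2 y, y \in Gam & adj x y.

Definition supnorm (g : T -> R) : R := \big[Num.max/0]_(x : T) `|g x|.

Definition gradnorm (g : T -> R) : R :=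
  \big[Num.max/0]_(xy : T * T | adj xy.1 xy.2) `|g xy.1 - g xy.2|.

(* delta = min_x (sum_{y in Gamma} w_xy) / d_x ; each ratio lies in [0,1],
   so using 1 as the neutral element of the min is harmless. *)
Definition delta (Gam : {set T}) : R :=
  \big[Num.min/1]_(x : T) ((\sum_(y in Gam) w x y) / deg x).

End Graph.

(* Main.v *)
Require Import Defs.
From mathcomp Require Import all_boot all_order all_algebra.
From mathcomp Require Import all_classical all_reals all_analysis.
From mathcomp Require Import lra.
Import Order.TTheory GRing.Theory Num.Theory.
Local Open Scope ring_scope.

Section Helpers.
Variables (R : realType) (T : finType) (w : T -> T -> R).

Lemma maxN_ge (u : T -> R) x y : adj w x y -> u y <= maxN w u x.
Proof.
move=> hy; rewrite /maxN; case: pickP => [y0 hy0|/(_ y)]; last by rewrite hy.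
exact: le_bigmax_cond.
Qed.

Lemma minN_le (u : T -> R) x y : adj w x y -> minN w u x <= u y.
Proof.
move=> hy; rewrite /minN; case: pickP => [y0 hy0|/(_ y)]; last by rewrite hy.
exact: bigmin_le_cond.
Qed.

Lemma maxN_le (u : T -> R) x B : (exists y, adj w x y) ->
  (forall y, adj w x y -> u y <= B) -> maxN w u x <= B.
Proof.
move=> [y hy] hB; rewrite /maxN; case: pickP => [y0 hy0|/(_ y)]; last by rewrite hy.
by apply: bigmax_le => //; apply: hB.
Qed.

Lemma minN_ge (u : T -> R) x B : (exists y, adj w x y) ->
  (forall y, adj w x y -> B <= u y) -> B <= minN w u x.
Proof.
move=> [y hy] hB; rewrite /minN; case: pickP => [y0 hy0|/(_ y)]; last by rewrite hy.
by apply: le_bigmin => //; apply: hB.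
Qed.

Lemma maxN_opp (u : T -> R) x : (exists y, adj w x y) ->
  maxN w (fun z => - u z) x = - minN w u x.
Proof.
move=> ex; apply: le_anti; apply/andP; split.
  by apply: maxN_le => // y hy; rewrite lerN2; apply: minN_le.
rewrite lerNl; apply: minN_ge => // y hy; rewrite lerNl.
exact: (maxN_ge (fun z => - u z)).
Qed.

Lemma minN_opp (u : T -> R) x : (exists y, adj w x y) ->
  minN w (fun z => - u z) x = - maxN w u x.
Proof.
move=> ex; apply: le_anti; apply/andP; split; last first.
  by apply: minN_ge => // y hy; rewrite lerN2; apply: maxN_ge.
rewrite lerNr; apply: maxN_le => // y hy; rewrite lerNr.
exact: (minN_le (fun z => - u z)).
Qed.

Lemma Lp_opp p (u : T -> R) x : (exists y, adj w x y) ->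
  Lp w p (fun z => - u z) x = - Lp w p u x.
Proof.
move=> ex; rewrite /Lp maxN_opp // minN_opp //.
have -> : \sum_y w x y * (- u x - - u y) = - \sum_y w x y * (u x - u y).
  rewrite -sumrN; apply: eq_bigr => y _; lra.
lra.
Qed.

End Helpers.

Section K.
Variables (R : realType) (T : finType) (w : T -> T -> R).

Lemma alpha_bounds {p : R} : 2 <= p -> 0 < alpha p /\ alpha p <= 1.
Proof.
move=> hp; rewrite /alpha; have hp1 : 0 < p - 1 by lra.
split; first by rewrite divr_gt0.
by rewrite ler_pdivrMr // mul1r; lra.
Qed.

Lemma deg_gt0 {x y} : (forall x y, 0 <= w x y) -> adj w x y -> 0 < deg w x.
Proof.
move=> hw hy; rewrite /deg (bigD1 y) //=.
have : 0 <= \sum_(i | i != y) w x i by apply: sumr_ge0.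
rewrite /adj in hy; lra.
Qed.

Lemma delta_le (Gam : {set T}) x : delta w Gam <= (\sum_(y in Gam) w x y) / deg w x.
Proof. exact: (bigmin_le_cond 1 (fun x => (\sum_(y in Gam) w x y) / deg w x) (j:=x) isT). Qed.

Lemma delta_le1 (Gam : {set T}) : delta w Gam <= 1.
Proof. exact: bigmin_le_id. Qed.


Lemma key (p : R) (Gam : {set T}) (u h : T -> R) (K : R) :
  (forall x y, 0 <= w x y) -> 2 <= p -> A1 w Gam -> 0 <= K ->
  (forall x y, adj w x y -> h y <= h x + K) ->
  (forall x, x \notin Gam -> Lp w p u x = 0) ->
  (forall x, x \in Gam -> u x <= h x) ->
  forall x, (u x - h x) * (1 - alpha p + 2 * alpha p * delta w Gam) <= 2 * K.
Proof.
move=> hw hp hA1 hK hh hL hG x.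
have [ha0 ha1] := alpha_bounds hp.
set a := alpha p in ha0 ha1 *; set d := delta w Gam.
have hd1 : d <= 1 := delta_le1 Gam.
have hd0 : 0 <= d.
  rewrite /d /delta; apply: le_bigmin => // z _.
  have [y0 hy0 hadj] := hA1 z.
  apply: divr_ge0; first by apply: sumr_ge0.
  exact: ltW (deg_gt0 hw hadj).
set c := 1 - a + 2 * a * d.
have hc0 : 0 <= c by rewrite /c; nra.
pose e i := u i - h i.
have [z _ hz] := @arg_maxP _ _ T x predT e isT.
have hex : (u x - h x) * c <= e z * c.
  by apply: ler_wpM2r => //; exact: (hz x isT).
apply: le_trans hex _.
have [hm0|hm0] := leP (e z) 0.
  have : e z * c <= 0 by nra.
  lra.
case hzG: (z \in Gam).
  by have := hG _ hzG; rewrite /e in hm0; lra.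
have hzG' : z \notin Gam by rewrite hzG.
set m := e z in hm0 hz *.
have [y0 hy0 hadj0] := hA1 z.
have hdeg := deg_gt0 hw hadj0.
have hex0 : exists y, adj w z y by exists y0.
have hS : m * (\sum_(y in Gam) w z y) - K * deg w z <=
          \sum_y w z y * (u z - u y).
  have hsplit : deg w z = \sum_(y in Gam) w z y + \sum_(y | y \notin Gam) w z y.
    by rewrite /deg (bigID (mem Gam)).
  have h1 : \sum_(y in Gam) w z y * (m - K) <= \sum_(y in Gam) w z y * (u z - u y).
    apply: ler_sum => y hyG.
    have [hw0|hwp] := eqVneq (w z y) 0.
      by rewrite hw0; lra.
    have hadj : adj w z y by rewrite /adj lt_def hwp hw.
    have := hh _ _ hadj; have := hG _ hyG; have := hw z y.
    rewrite /m /e => *; nra.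
  have h2 : \sum_(y | y \notin Gam) w z y * (- K) <=
            \sum_(y | y \notin Gam) w z y * (u z - u y).
    apply: ler_sum => y hyG.
    have [hw0|hwp] := eqVneq (w z y) 0.
      by rewrite hw0; lra.
    have hadj : adj w z y by rewrite /adj lt_def hwp hw.
    have hzy : e y <= e z := hz y isT.
    have := hh _ _ hadj; rewrite /e in hzy.
    move=> hhy; apply: ler_wpM2l; [exact: hw | lra].
  rewrite -!mulr_suml in h1 h2.
  rewrite hsplit [X in _ <= X](bigID (mem Gam)) /=.
  lra.
have hA : m * d - K <= (1 / deg w z) * \sum_y w z y * (u z - u y).
  have hdz := delta_le Gam z.
  rewrite mul1r -(ler_pM2l hdeg) mulrA mulfV ?gt_eqF // mul1r.
  rewrite ler_pdivlMr // in hdz.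
  have : 0 <= m by lra.
  rewrite -/d in hdz; nra.
have hmax : maxN w u z <= h z + K + m.
  apply: maxN_le => // y hy; have := hh _ _ hy.
  have hzy : e y <= e z := hz y isT.
  rewrite /m /e in hzy *; lra.
have hmin : minN w u z <= h z + K.
  apply: le_trans (@minN_le R T w u _ _ hadj0) _.
  have := hh _ _ hadj0; have := hG _ hy0; lra.
have hB : m / 2 - K <= u z - (maxN w u z + minN w u z) / 2.
  rewrite /m /e in hmax *; lra.
have := hL _ hzG'; rewrite /Lp -/a => hL0.
have hA' := ler_wpM2l (ltW ha0) hA.
have h1a : 0 <= 1 - a by lra.
have hB' := ler_wpM2l h1a hB.
rewrite /c; nra.
Qed.

End K.

Lemma expR1_le (R : realType) : expR (1 : R) <= 256 / 81.
Proof.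
have h := @expR_ge1Dx R (- (1/4)).
have hp := @expR_gt0 R (1/4).
rewrite expRN in h.
have hq : expR (1/4 : R) <= 4/3.
  rewrite -(ler_pM2r hp) in h; rewrite mulVf ?gt_eqF // in h.
  nra.
have -> : (1 : R) = 4%:R * (1/4) by rewrite mulrA mulr1 mulfV // pnatr_eq0.
rewrite expRM_natl.
have h0 : 0 <= expR (1/4 : R) by exact: ltW.
set t := expR _ in hq h0 *.
have : t ^+ 2 <= (4/3) ^+ 2 by rewrite ler_pXn2r // nnegrE; lra.
move=> h2.
have -> : t ^+ 4 = (t ^+ 2) ^+ 2 by rewrite -exprM.
have h20 : 0 <= t ^+ 2 by apply: exprn_ge0.
have : (t ^+ 2) ^+ 2 <= ((4/3) ^+ 2) ^+ 2 by rewrite ler_pXn2r // nnegrE; nra.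
move=> h4; apply: le_trans h4 _.
rewrite -!exprM; nra.
Qed.

Theorem mainTheorem5 (R : realType) (T : finType) (w : T -> T -> R)
    (Gam : {set T}) (p : R) (g u : T -> R) :
  (forall x y, w x y = w y x) ->
  (forall x y, 0 <= w x y) ->
  connected_graph w ->
  2 <= p ->
  A1 w Gam ->
  0 < gradnorm w g ->
  gradnorm w g <= supnorm g ->
  solves_P w p Gam g u ->
  forall x y, 0 < w x y ->
  `|u x - u y| <=
    (4 * ln (supnorm g / gradnorm w g) / (1 - alpha p + 2 * alpha p * delta w Gam) + 5)
    * gradnorm w g.
Proof.
move=> hsym hw hconn hp hA1 hD hDG [hL hG] x y hxy.
have [ha0 ha1] := @alpha_bounds R p hp.
set D := gradnorm w g in hD hDG *; set G := supnorm g in hDG *.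
set a := alpha p in ha0 ha1 *; set d := delta w Gam.
have hd1 : d <= 1 := @delta_le1 R T w Gam.
have hd0 : 0 < d.
  rewrite /d /delta; apply/bigmin_gtP; split => // z _.
  have [y0 hy0 hadj] := hA1 z.
  apply: divr_gt0; last exact: (@deg_gt0 R T w _ _ hw hadj).
  rewrite (bigD1 y0) //=.
  have : 0 <= \sum_(i in Gam | i != y0) w z i by apply: sumr_ge0.
  rewrite /adj in hadj; lra.
set c := 1 - a + 2 * a * d.
have hc0 : 0 < c by rewrite /c; nra.
have hc2 : c <= 2 by rewrite /c; nra.
have hex : forall z, exists y, adj w z y.
  by move=> z; have [y0 _ h] := hA1 z; exists y0.
have hgrad : forall x y, adj w x y -> `|g x - g y| <= D.
  move=> x1 y1 hadj.
  exact: (le_bigmax_cond 0 (fun xy : T * T => `|g xy.1 - g xy.2|) (j := (x1, y1)) hadj).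
have hsup : forall z, `|g z| <= G.
  move=> z; exact: (le_bigmax 0 (fun z => `|g z|) z).
have hK1 := @key R T w p Gam u g D hw hp hA1 (ltW hD)
  (fun x1 y1 h => ltac:(have := hgrad _ _ h; rewrite ler_norml => /andP[h1 h2]; lra))
  hL (fun z hz => ltac:(by rewrite /= hG)).
have hL' : forall z, z \notin Gam -> Lp w p (fun z => - u z) z = 0.
  by move=> z hz; rewrite (@Lp_opp R T w p u z (hex z)) hL ?oppr0.
have hK2 := @key R T w p Gam (fun z => - u z) (fun z => - g z) D hw hp hA1 (ltW hD)
  (fun x1 y1 h => ltac:(have := hgrad _ _ h; rewrite ler_norml => /andP[h1 h2]; lra))
  hL' (fun z hz => ltac:(by rewrite /= hG)).
have hG3 : forall z, z \in Gam -> u z <= G.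
  move=> z hz; rewrite hG //; have := hsup z; have := ler_norm (g z); lra.
have hG4 : forall z, z \in Gam -> - u z <= G.
  move=> z hz; rewrite hG //; have := hsup z; have := ler_norm (- g z).
  rewrite normrN; lra.
have hK3 := @key R T w p Gam u (fun _ => G) 0 hw hp hA1 (lexx 0)
  (fun x1 y1 h => ltac:(by rewrite addr0)) hL hG3.
have hK4 := @key R T w p Gam (fun z => - u z) (fun _ => G) 0 hw hp hA1 (lexx 0)
  (fun x1 y1 h => ltac:(by rewrite addr0)) hL' hG4.
rewrite -/a -/d -/c in hK1 hK2 hK3 hK4.
have he : forall z, `|u z - g z| <= 2 * D / c.
  move=> z; rewrite ler_pdivlMr //.
  have := hK1 z; have := hK2 z.
  have [h0|h0] := leP 0 (u z - g z).
    rewrite ger0_norm //; lra.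
  rewrite ltr0_norm //; lra.
have hu : forall z, `|u z| <= G.
  move=> z; have := hK3 z; have := hK4 z.
  rewrite mulr0 => h3 h4.
  have h3' : u z - G <= 0 by nra.
  have h4' : - u z - G <= 0 by nra.
  rewrite ler_norml; apply/andP; split; lra.
have hxy' : adj w x y by [].
have hb1 : `|u x - u y| <= 4 * D / c + D.
  have t1 := ler_distD (g x) (u x) (u y).
  have t2 := ler_distD (g y) (g x) (u y).
  have t3 := hgrad _ _ hxy'. have t4 := he x. have t5 := he y.
  rewrite distrC in t5; lra.
have hb2 : `|u x - u y| <= 2 * G.
  have := ler_normB (u x) (u y); have := hu x; have := hu y; lra.
set r := G / D.
have hr1 : 1 <= r by rewrite /r ler_pdivlMr // mul1r.
have hGr : G = r * D by rewrite /r mulfVK // gt_eqF.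
set t := ln r.
have ht0 : 0 <= t := ln_ge0 hr1.
have [ht1|ht1] := leP 1 t.
  have : 4 * D / c <= 4 * t / c * D.
    rewrite mulrAC ler_pM2r ?invr_gt0 // ler_pM2r ?invr_gt0 //; lra.
  lra.
have hre : r < 256 / 81.
  have hrp : r \is Num.pos by rewrite posrE; lra.
  rewrite -(lnK hrp) -/t; apply: lt_le_trans (expR1_le R).
  by rewrite ltr_expR.
have htr : 1 - r^-1 <= t.
  have hri : 0 < r^-1 by rewrite invr_gt0; lra.
  have := @le_ln1Dx R (r^-1 - 1) ltac:(lra).
  rewrite addrC subrK lnV ?posrE; last lra.
  rewrite -/t; lra.
have htr' : r - 1 <= t * r.
  have : (1 - r^-1) * r <= t * r by rewrite ler_pM2r //; lra.
  have hr0 : 0 < r by lra.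
  rewrite mulrBl mulVf ?gt_eqF //; lra.
have h2r : 2 * r <= 2 * t + 5.
  have : 0 <= (r - 1) * (256/81 - r) by apply: mulr_ge0; lra.
  nra.
have h2t : 2 * t <= 4 * t / c.
  rewrite ler_pdivlMr //; nra.
rewrite hGr in hb2.
apply: le_trans hb2 _.
rewrite mulrA; apply: ler_wpM2r; [exact: ltW hD | lra].
Qed.
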